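(* If $R$ is an Armendariz ring, then for every $n\ge 1$ the upper triangular matrix ring $T_n(R)$ is almost Armendariz.
   Context: All rings are associative with identity. A ring $R$ is Armendariz if whenever $f(x)=\sum_{i=0}^m a_ix^i$, $g(x)=\sum_{j=0}^n b_jx^j\in R[x]$ satisfy $f(x)g(x)=0$, then $a_ib_j=0$ for all $i,j$. For a ring $R$, $P(R)$ denotes the prime radical of $R$ (the intersection of all prime ideals of $R$, equivalently the set of strongly nilpotent elements of $R$). A ring $R$ is called almost Armendariz if whenever $f(x)=\sum_{i=0}^m a_ix^i$ and $g(x)=\sum_{j=0}^n b_jx^j\in R[x]$ satisfy $f(x)g(x)=0$, then $a_ib_j\in P(R)$ for all $0\le i\le m$, $0\le j\le n$. $T_n(R)$ denotes the ring of $n\times n$ upper triangular matrices over $R$. *)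

(* Defs.v *)
From HB Require Import structures.
From mathcomp Require Import all_boot all_order all_algebra.
Set Implicit Arguments. Unset Strict Implicit. Unset Printing Implicit Defensive.
Import GRing.Theory.
Local Open Scope ring_scope.

Definition armendariz (R : nzRingType) : Prop :=
  forall f g : {poly R}, f * g = 0 ->
    forall i j : nat, f`_i * g`_j = 0.

Definition prime_ideal (R : nzRingType) (P : R -> Prop) : Prop :=
  [/\ P 0, (forall x y, P x -> P y -> P (x - y)),
      (forall r x, P x -> P (r * x) /\ P (x * r)),
      ~ P 1 &
      (forall a b, (forall r, P (a * r * b)) -> P a \/ P b)].

Definition prime_radical (R : nzRingType) (x : R) : Prop :=
  forall P : R -> Prop, prime_ideal P -> P x.

Definition almost_armendariz (R : nzRingType) : Prop :=
  forall f g : {poly R}, f * g = 0 ->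
    forall i j : nat, prime_radical (f`_i * g`_j).

Section UpperTriangular.
Variables (R : nzRingType) (n : nat).

Definition upper_tri : {pred 'M[R]_n.+1} :=
  fun A => [forall i : 'I_n.+1, forall j : 'I_n.+1, (j < i)%N ==> (A i j == 0)].

Fact upper_tri_subring_closed : subring_closed upper_tri.
Proof.
split.
- apply/forallP => i; apply/forallP => j; apply/implyP => lt_ji.
  rewrite mxE; have ne : (i == j) = false by apply/eqP => eij; rewrite eij ltnn in lt_ji.
  by rewrite ne.
- move=> A B /forallP hA /forallP hB.
  apply/forallP => i; apply/forallP => j; apply/implyP => lt_ji.
  rewrite !mxE (eqP (implyP (forallP (hA i) j) lt_ji)).
  by rewrite (eqP (implyP (forallP (hB i) j) lt_ji)) subrr.
- move=> A B /forallP hA /forallP hB.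
  apply/forallP => i; apply/forallP => j; apply/implyP => lt_ji.
  rewrite !mxE; apply/eqP; apply: big1 => k _.
  case: (ltnP k i) => hk.
  + by rewrite (eqP (implyP (forallP (hA i) k) hk)) mul0r.
  + by rewrite (eqP (implyP (forallP (hB k) j) (leq_trans lt_ji hk))) mulr0.
Qed.

HB.instance Definition _ := GRing.isSubringClosed.Build _ upper_tri
  upper_tri_subring_closed.

Record uptri_mx := UpTri { uptri_val :> 'M[R]_n.+1; _ : uptri_val \in upper_tri }.

HB.instance Definition _ := [isSub for uptri_val].
HB.instance Definition _ := [Choice of uptri_mx by <:].
HB.instance Definition _ := [SubChoice_isSubNzRing of uptri_mx by <:].

End UpperTriangular.

(* T_n(R) for n >= 1 : written T_(m.+1) with m : nat. *)
Notation "''T_' n [ R ]" := (uptri_mx R n.-1)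
  (at level 8, n at level 2, format "''T_' n [ R ]") : type_scope.

(* Main.v *)
Require Import Defs.
From HB Require Import structures.
From mathcomp Require Import all_boot all_order all_algebra.
Local Open Scope ring_scope.
Import GRing.Theory.

Section Aux.
Local Set Implicit Arguments.
Variables (R : nzRingType) (m : nat).

Definition band (a : nat) (A : 'M[R]_m.+1) : Prop :=
  forall i j : 'I_m.+1, (j < i + a)%N -> A i j = 0.

Lemma band_mul a b A B : band a A -> band b B -> band (a + b) (A *m B).
Proof.
move=> hA hB i j lt; rewrite mxE; apply: big1 => k _.
case: (ltnP k (i + a)) => hk.
  by rewrite hA // mul0r.
rewrite hB ?mulr0 //; apply: leq_trans lt _.
by rewrite addnA leq_add2r.
Qed.

Lemma band_mono a b A : (a <= b)%N -> band b A -> band a A.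
Proof. move=> hab hA i j lt; apply: hA; apply: leq_trans lt _; by rewrite leq_add2l. Qed.

Lemma band0 (A : 'T_m.+1[R]) : band 0 (val A).
Proof.
move=> i j; rewrite addn0 => lt.
case: A => A /= /forallP hA.
exact: (eqP (implyP (forallP (hA i) j) lt)).
Qed.

Lemma band_top (A : 'M[R]_m.+1) : band m.+1 A -> A = 0.
Proof.
move=> hA; apply/matrixP => i j; rewrite mxE hA //.
by apply: leq_trans (ltn_ord j) _; rewrite leq_addl.
Qed.

Lemma valM (A B : 'T_m.+1[R]) : val (A * B) = val A *m val B.
Proof. by rewrite rmorphM /= mulmxE. Qed.

Lemma val_sum n (F : 'I_n -> 'T_m.+1[R]) :
  val (\sum_(j < n) F j) = \sum_(j < n) val (F j).
Proof. elim/big_rec2: _ => [|j x y _ <-]; by rewrite ?rmorph0 ?rmorphD. Qed.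

Lemma band_in_prime (P : 'T_m.+1[R] -> Prop) : prime_ideal P ->
  forall x : 'T_m.+1[R], band 1 (val x) -> P x.
Proof.
case=> P0 _ Pid _ Pprime.
suff H : forall d, (d < m.+1)%N -> forall x : 'T_m.+1[R], band (m.+1 - d) (val x) -> P x.
  move=> x hx; apply: (H m) => //; by rewrite subSnn.
elim=> [|d IH] hd x hx.
  rewrite subn0 in hx.
  have -> : x = 0 by apply: val_inj; rewrite (band_top hx).
  exact: P0.
have hd' : (d < m.+1)%N by apply: ltnW.
have hk : (m.+1 - d = (m.+1 - d.+1).+1)%N.
  by rewrite subnS prednK // subn_gt0.
set k := (m.+1 - d.+1)%N in hx hk.
have k1 : (1 <= k)%N by rewrite /k subn_gt0.
have : forall r, P (x * r * x).
  move=> r; apply: (IH hd').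
  rewrite -mulrA valM hk.
  apply: (@band_mono _ (k + k)%N); first by rewrite -addn1 leq_add2l.
  apply: band_mul => //.
  rewrite valM -[k]add0n.
  exact: band_mul (band0 r) hx.
by move=> /Pprime [].
Qed.

End Aux.

Theorem corollary2p1 (R : nzRingType) :
  armendariz R -> forall n : nat, (1 <= n)%N -> almost_armendariz 'T_n[R].
Proof.
move=> hR [//|m] _ f g fg0 i j P hP.
apply: (band_in_prime hP).
set D := fun (p : {poly 'T_m.+1[R]}) (k : 'I_m.+1) =>
  \poly_(t < size p) ((val p`_t) k k).
have DE p k t : (D p k)`_t = (val p`_t) k k.
  rewrite /D coef_poly; case: ltnP => // h.
  by rewrite nth_default // mxE.
have diagM (A B : 'T_m.+1[R]) k : (val (A * B)) k k = (val A) k k * (val B) k k.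
  rewrite valM mxE (bigD1 k) //= big1 ?addr0 // => l /negPf nl.
  case: (ltngtP l k) => h.
  - by rewrite (band0 A) ?addn0 // mul0r.
  - by rewrite (band0 B) ?addn0 // mulr0.
  - by move: nl; rewrite (val_inj h) eqxx.
have DM k : D f k * D g k = 0.
  apply/polyP => t; rewrite coefM coef0.
  have := congr1 (fun p : {poly 'T_m.+1[R]} => (val (p`_t) : 'M[R]_m.+1) k k) fg0.
  rewrite /= coefM coef0 => H.
  rewrite -[RHS](_ : (val (0 : 'T_m.+1[R])) k k = 0); last by rewrite mxE.
  rewrite -H val_sum summxE; apply: eq_bigr => l _.
  by rewrite !DE diagM.
move=> a b lt.
case: (ltngtP b a) => h.
- by rewrite (band0 _) ?addn0.
- by exfalso; move: lt; rewrite addn1 ltnS leqNgt h.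
- rewrite (val_inj h) diagM.
  by have := hR _ _ (DM a) i j; rewrite !DE.
Qed.
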